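(* Let $n\ge 1$ and $\gamma_1,\dots,\gamma_n>0$. For $i=1,\dots,n$ let $H_i$ be a system $\dot x_i=f_i(x_i,u_i)$, $y_i=h_i(x_i)$ ($x_i\in\mathbb{R}^{m_i}$, $u_i,y_i\in\mathbb{R}$) with a $C^1$ function $V_i$ satisfying $\nabla V_i(x_i)\cdot f_i(x_i,u_i)\le -h_i(x_i)^2+\gamma_iu_ih_i(x_i)$ for all $x_i,u_i$. Consider the cascade $u_1=u$ (external input $u\in\mathbb{R}$), $u_i=y_{i-1}$ for $i=2,\dots,n$, and write $y=(y_1,\dots,y_n)$. Then for every $$\delta>\gamma_1\cdots\gamma_n\cos\big(\pi/(n+1)\big)^{n+1}$$ there exist $d_1,\dots,d_n>0$ and $\epsilon>0$ such that $V=\sum_{i=1}^nd_iV_i$ satisfies, along the cascade dynamics and for all inputs $u$, $$\dot V\le-\epsilon|y|^2+\delta u^2+u\,y_n.$$ *)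

(* Defs.v *)
From HB Require Import structures.
From mathcomp Require Import all_boot all_order all_algebra.
From mathcomp Require Import all_classical all_reals all_analysis.
Set Implicit Arguments. Unset Strict Implicit. Unset Printing Implicit Defensive.
Import Order.TTheory GRing.Theory Num.Theory.
Import numFieldNormedType.Exports.
Local Open Scope ring_scope.

(* Subsystems are indexed by i = 0, ..., n-1 (paper: 1, ..., n).
   Input of subsystem i in the cascade: u_0 = u (external input),
   u_{i} = y_{i-1} = h_{i-1}(x_{i-1}) for i >= 1. *)
Definition cascade_input (R : realType) (m : nat -> nat)
  (h : forall i, 'rV[R]_(m i) -> R) (x : forall i, 'rV[R]_(m i)) (u : R)
  (i : nat) : R :=
  match i with
  | 0 => u
  | j.+1 => h j (x j)
  end.

Definition C1 (R : realType) (k : nat) (V : 'rV[R]_k -> R) : Prop :=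
  (forall x, differentiable V x) /\ (forall v, continuous (fun x => 'd V x v)).

(* Main.v *)
Require Import Defs.
From HB Require Import structures.
From mathcomp Require Import all_boot all_order all_algebra.
From mathcomp Require Import all_classical all_reals all_analysis.
From mathcomp Require Import ring lra zify.
Import Order.TTheory GRing.Theory Num.Theory.
Import numFieldNormedType.Exports.
Local Open Scope ring_scope.

Section Alg.
Variable R : realFieldType.

Lemma two_term (A C p q : R) : 0 < p -> 0 < q ->
  (A + C) ^+ 2 / (p + q) <= A ^+ 2 / p + C ^+ 2 / q.
Proof.
move=> p0 q0.
have pq0 : 0 < p + q by lra.
rewrite -subr_ge0.
have -> : A ^+ 2 / p + C ^+ 2 / q - (A + C) ^+ 2 / (p + q)
   = (q * A - p * C) ^+ 2 / (p * q * (p + q)).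
  by field; rewrite ?gt_eqF ?mulr_gt0.
by apply: divr_ge0; [apply: sqr_ge0| apply/ltW/mulr_gt0 => //; apply: mulr_gt0].
Qed.

Lemma step_alg (lam vkm vk vk1 wk wk1 u0 Tk Tk1 : R) :
  0 < vk -> 0 < vk1 -> 0 < Tk -> Tk1 = Tk + 1 / (vk * vk1) ->
  vkm + vk1 = (2 - lam) * vk ->
  (wk1 / vk1 - u0) ^+ 2 / Tk1 + lam * wk ^+ 2 + (vk1 - vk) * wk1 ^+ 2 / vk1
  <= (wk / vk - u0) ^+ 2 / Tk + (vk - vkm) * wk ^+ 2 / vk + (wk1 - wk) ^+ 2.
Proof.
move=> vk0 vk10 Tk0 -> hrec.
have hm : vkm = (2 - lam) * vk - vk1 by rewrite -hrec addrK.
rewrite hm.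
have q0 : 0 < 1 / (vk * vk1) by rewrite divr_gt0 // mulr_gt0.
have := two_term (wk / vk - u0) (wk1 / vk1 - wk / vk) _ _ Tk0 q0.
have -> : wk / vk - u0 + (wk1 / vk1 - wk / vk) = wk1 / vk1 - u0 by ring.
have E : (wk1 - wk) ^+ 2 = (wk1 / vk1 - wk / vk) ^+ 2 / (1 / (vk * vk1))
   + (vk1 - vk) * (wk1 ^+ 2 / vk1 - wk ^+ 2 / vk).
  by field; rewrite ?gt_eqF.
have E2 : (vk - ((2 - lam) * vk - vk1)) * wk ^+ 2 / vk
   = lam * wk ^+ 2 + (vk1 - vk) * (wk ^+ 2 / vk) .
  by field; rewrite ?gt_eqF.
rewrite E E2.
have E3 : (vk1 - vk) * wk1 ^+ 2 / vk1 = (vk1 - vk) * (wk1 ^+ 2 / vk1) by rewrite mulrA.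
rewrite E3.
lra.
Qed.

Lemma base_alg (v0 v1 w0 w1 : R) : 0 < v0 -> 0 < v1 ->
  (w1 - w0) ^+ 2 = (w1 / v1 - w0 / v0) ^+ 2 / (1 / (v0 * v1))
     + (v1 - v0) * w1 ^+ 2 / v1 - (v1 - v0) * w0 ^+ 2 / v0.
Proof. by move=> h0 h1; field; rewrite ?gt_eqF. Qed.

Lemma fin_alg (lam v0 v1 w0 wn : R) : 0 < v0 -> v1 = (3 - lam) * v0 ->
  (wn / v0 - w0 / v0) ^+ 2 / (1 / v0 ^+ 2) + (v0 - v1) * wn ^+ 2 / v0
   - (v1 - v0) * w0 ^+ 2 / v0 + (w0 + wn) ^+ 2 - lam * w0 ^+ 2 - lam * wn ^+ 2 = 0.
Proof. by move=> h0 ->; field; rewrite ?gt_eqF. Qed.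

End Alg.

Section Core.
Variable R : realFieldType.

Lemma core_abs (n : nat) (w v T : nat -> R) (lam : R) :
  (forall j, (j <= n.+1)%N -> 0 < v j) ->
  (forall j, (0 < j <= n.+1)%N -> 0 < T j) ->
  T 1%N = 1 / (v 0%N * v 1%N) ->
  (forall j, (0 < j < n.+1)%N -> T j.+1 = T j + 1 / (v j * v j.+1)) ->
  (forall j, (0 < j < n.+1)%N -> v j.-1 + v j.+1 = (2 - lam) * v j) ->
  v 1%N = (3 - lam) * v 0%N ->
  v n.+1 = v 0%N -> v n = v 1%N -> T n.+1 = 1 / v 0%N ^+ 2 ->
  \sum_(i < n.+1) w i * w i.+1 - w 0%N * w n.+1
    <= (1 - lam / 2) * \sum_(i < n.+2) w i ^+ 2.
Proof.
move=> vpos Tpos T1 Tstep vrec v1E vn vn1 Tn.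
have inv : forall j, (j <= n)%N ->
  (w j.+1 / v j.+1 - w 0%N / v 0%N) ^+ 2 / T j.+1 + lam * \sum_(i < j) w i.+1 ^+ 2
   + (v j.+1 - v j) * w j.+1 ^+ 2 / v j.+1 - (v 1%N - v 0%N) * w 0%N ^+ 2 / v 0%N
  <= \sum_(i < j.+1) (w i.+1 - w i) ^+ 2.
  elim=> [_|j IH hj].
    rewrite big_ord0 big_ord1 mulr0 addr0 T1.
    rewrite (@base_alg R _ _ (w 0%N) (w 1%N) (vpos 0%N isT) (vpos 1%N isT)).
    by rewrite lexx.
  have hj' : (j <= n)%N by apply: ltnW.
  have IH' := IH hj'.
  rewrite big_ord_recr /= [X in _ <= X]big_ord_recr /=.
  have := @step_alg R lam (v j) _ _ (w j.+1) (w j.+2) (w 0%N / v 0%N) _ _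
    (vpos j.+1 hj') (vpos j.+2 hj) (Tpos j.+1 hj')
    (Tstep j.+1 hj) (vrec j.+1 hj).
  lra.
have := inv n (leqnn n).
have D : \sum_(i < n.+1) (w i.+1 - w i) ^+ 2 = \sum_(i < n.+1) w i.+1 ^+ 2
   + \sum_(i < n.+1) w i ^+ 2 - 2 * \sum_(i < n.+1) w i * w i.+1.
  rewrite mulr_sumr -big_split /= -sumrB; apply: eq_bigr => i _; ring.
rewrite D.
have S1 : \sum_(i < n.+2) w i ^+ 2 = w 0%N ^+ 2 + (\sum_(i < n) w i.+1 ^+ 2 + w n.+1 ^+ 2).
  by rewrite big_ord_recl big_ord_recr.
have S2 : \sum_(i < n.+1) w i ^+ 2 = w 0%N ^+ 2 + \sum_(i < n) w i.+1 ^+ 2.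
  by rewrite big_ord_recl.
have S3 : \sum_(i < n.+1) w i.+1 ^+ 2 = \sum_(i < n) w i.+1 ^+ 2 + w n.+1 ^+ 2.
  by rewrite big_ord_recr.
rewrite S1 S2 S3.
rewrite vn vn1 Tn.
have := @fin_alg R lam _ _ (w 0%N) (w n.+1) (vpos 0%N isT) v1E.
lra.
Qed.
End Core.

Section Trig.
Variable R : realType.

Lemma sin_pos (k M : nat) : (0 < k < M)%N -> 0 < sin (k%:R * (pi / M%:R) : R).
Proof.
case/andP=> k0 kM; apply: sin_gt0_pi; apply/andP; split.
  by apply: mulr_gt0; [rewrite ltr0n| apply: divr_gt0; [exact: pi_gt0| rewrite ltr0n; lia]].
have M0 : (0 : R) < M%:R by rewrite ltr0n; lia.
rewrite mulrCA gtr_pMr ?pi_gt0 // ltr_pdivrMr // mul1r ltr_nat //.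
Qed.

Lemma sin_pi_sub (x : R) : sin (pi - x) = sin x.
Proof. by rewrite addrC sinDpi sinN opprK. Qed.

Lemma sin_sum (x y : R) : sin (x - y) + sin (x + y) = 2 * cos y * sin x.
Proof. rewrite sinB sinD; ring. Qed.

Lemma T_poly (S C s c : R) : (S * c - C * s) * (S * (c * c - s * s) + C * (s * c + c * s)) +
   (s * c + c * s) * s - (S * c + C * s) * S
   = (s ^+ 2 + c ^+ 2 - 1) * (S ^+ 2 * c + S * C * s) + (S ^+ 2 + C ^+ 2 - 1) * (- 2 * s ^+ 2 * c).
Proof. ring. Qed.

Lemma T_ident (x p : R) :
  sin (x - p) * sin (x + (p + p)) + sin (p + p) * sin p = sin (x + p) * sin x.
Proof.
rewrite sinB !sinD cosD.
apply/eqP; rewrite -subr_eq0; apply/eqP.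
rewrite T_poly !sin2cos2; ring.
Qed.

Lemma angD (a b : nat) (f : R) : ((a + b)%N)%:R * f = a%:R * f + b%:R * f.
Proof. by rewrite natrD mulrDl. Qed.


Lemma angE (a b : nat) (f : R) : a = b -> a%:R * f = b%:R * f.
Proof. by move->. Qed.

Lemma Tstep_alg (a b c d e g : R) : b != 0 -> c != 0 -> d != 0 -> e != 0 ->
  a * c + d * e = g * b -> g / (d * e * c) = a / (d * e * b) + 1 / (b * c).
Proof.
move=> b0 c0 d0 e0 H.
have -> : g = (a * c + d * e) / b by rewrite H mulfK.
by field; rewrite ?b0 ?c0 ?d0 ?e0.
Qed.

Lemma core_trig (n : nat) (w : nat -> R) :
  \sum_(i < n.+1) w i * w i.+1 - w 0%N * w n.+1
    <= cos (pi / n.+2%:R) * \sum_(i < n.+2) w i ^+ 2.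
Proof.
pose M := (2 * n.+2)%N.
pose f := pi / (M%:R : R).
pose v j := sin ((2 * j + 1)%:R * f).
pose T j := sin ((2 * j)%:R * f) / (sin ((2 * 1)%:R * f) * v 0%N * v j).
pose lam := 2 - 2 * cos ((2 * 1)%:R * f).
have M0 : (M%:R : R) != 0 by rewrite pnatr_eq0 /M.
have q_eq : (2 * 1)%:R * f = pi / n.+2%:R.
  rewrite /f /M !natrM; field.
  by rewrite gt_eqF //; have := ler0n R n; lra.
have Mf : M%:R * f = pi by rewrite /f mulrC divfK.
have hcos : 1 - lam / 2 = cos (pi / n.+2%:R) by rewrite /lam q_eq; field.
have sp : forall k, (0 < k < M)%N -> 0 < sin (k%:R * f) by move=> k hk; exact: sin_pos.
have vpos : forall j, (j <= n.+1)%N -> 0 < v j.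
  by move=> j hj; apply: sp; rewrite /M; lia.
have q0 : 0 < sin ((2 * 1)%:R * f) by apply: sp; rewrite /M; lia.
have v0E : v 0%N = sin ((2 * 0 + 1)%:R * f) by [].
have a3 : (2 * 1)%:R * f = (2 * 0 + 1)%:R * f + (2 * 0 + 1)%:R * f.
  by rewrite -angD; apply: angE; lia.
have vn : v n.+1 = v 0%N.
  rewrite /v (_ : (2 * n.+1 + 1)%:R * f = pi - (2 * 0 + 1)%:R * f) ?sin_pi_sub //.
  by rewrite -Mf (angE _ _ f (_ : M = (2 * n.+1 + 1) + (2 * 0 + 1))%N) ?angD ?addrK //; rewrite /M; lia.
rewrite -hcos.
apply: (@core_abs R n w v T lam).
- exact: vpos.
- move=> j /andP[j0 jn]; rewrite /T; apply: divr_gt0; first by apply: sp; rewrite /M; lia.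
  by rewrite !mulr_gt0 // vpos.
- rewrite /T; field.
  by rewrite !gt_eqF ?vpos.
- move=> j /andP[j0 jn]; rewrite /T /v.
  have e0 : (2 * j + 1)%:R * f = (2 * j)%:R * f + (2 * 0 + 1)%:R * f.
    by rewrite -angD; apply: angE; lia.
  have a0 : (2 * j)%:R * f = (2 * j + 1)%:R * f - (2 * 0 + 1)%:R * f by rewrite e0 addrK.
  have a1 : (2 * j.+1)%:R * f = (2 * j + 1)%:R * f + (2 * 0 + 1)%:R * f.
    by rewrite -angD; apply: angE; lia.
  have a2 : (2 * j.+1 + 1)%:R * f = (2 * j + 1)%:R * f + (2 * 1)%:R * f.
    by rewrite -angD; apply: angE; lia.
  rewrite a0 a1 a2 a3.
  apply: Tstep_alg; rewrite ?gt_eqF //.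
  + have := vpos j; rewrite /v; apply; lia.
  + rewrite -a3 -a2; have := vpos j.+1; rewrite /v; apply; lia.
  + by rewrite -a3.
  + have := vpos 0%N; rewrite /v; apply; lia.
  + exact: T_ident.
- move=> j /andP[j0 jn]; case: j j0 jn => // j _ jn /=.
  rewrite /v /lam.
  have b1 : (2 * j + 1)%:R * f = (2 * j.+1 + 1)%:R * f - (2 * 1)%:R * f.
    by rewrite (angE _ _ f (_ : (2 * j.+1 + 1 = (2 * j + 1) + 2 * 1)%N)) ?angD ?addrK //; lia.
  have b2 : (2 * j.+2 + 1)%:R * f = (2 * j.+1 + 1)%:R * f + (2 * 1)%:R * f.
    by rewrite -angD; apply: angE; lia.
  rewrite b1 b2 sin_sum; ring.
- rewrite /v /lam.
  have c1 : (2 * 1 + 1)%:R * f = (2 * 0 + 1)%:R * f + (2 * 1)%:R * f.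
    by rewrite -angD; apply: angE; lia.
  have := sin_sum ((2 * 0 + 1)%:R * f) ((2 * 1)%:R * f).
  rewrite -c1 {1}a3 (_ : forall x : R, x - (x + x) = - x); last by move=> x; ring.
  rewrite sinN => H.
  have -> : sin ((2 * 1 + 1)%:R * f) = 2 * cos ((2 * 1)%:R * f) * sin ((2 * 0 + 1)%:R * f)
      + sin ((2 * 0 + 1)%:R * f) by rewrite -H; ring.
  ring.
- exact: vn.
- rewrite /v (_ : (2 * n + 1)%:R * f = pi - (2 * 1 + 1)%:R * f) ?sin_pi_sub //.
  by rewrite -Mf (angE _ _ f (_ : M = (2 * n + 1) + (2 * 1 + 1))%N) ?angD ?addrK //; rewrite /M; lia.
- rewrite /T vn.
  rewrite (_ : (2 * n.+1)%:R * f = pi - (2 * 1)%:R * f) ?sin_pi_sub.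
    by field; rewrite !gt_eqF ?vpos.
  by rewrite -Mf (angE _ _ f (_ : M = (2 * n.+1) + (2 * 1))%N) ?angD ?addrK //; rewrite /M; lia.
Qed.

End Trig.

Theorem corollary3 (R : realType) (n : nat) (hn : (1 <= n)%N)
  (gamma : nat -> R) (hgamma : forall i, (i < n)%N -> 0 < gamma i)
  (m : nat -> nat)
  (f : forall i, 'rV[R]_(m i) -> R -> 'rV[R]_(m i))
  (h : forall i, 'rV[R]_(m i) -> R)
  (V : forall i, 'rV[R]_(m i) -> R)
  (hV : forall i, (i < n)%N -> C1 (V i))
  (hdiss : forall i, (i < n)%N -> forall (xi : 'rV[R]_(m i)) (ui : R),
      'd (V i) xi (f i xi ui) <= - (h i xi) ^+ 2 + gamma i * ui * h i xi)
  (delta : R)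
  (hdelta : (\prod_(i < n) gamma i) * (cos (pi / n.+1%:R)) ^+ n.+1 < delta) :
  exists (d : nat -> R) (eps : R),
    (forall i, (i < n)%N -> 0 < d i) /\ 0 < eps /\
    forall (x : forall i, 'rV[R]_(m i)) (u : R),
      \sum_(i < n) d i * 'd (V i) (x i) (f i (x i) (cascade_input h x u i))
      <= - eps * (\sum_(i < n) (h i (x i)) ^+ 2) + delta * u ^+ 2
         + u * h n.-1 (x n.-1).
Proof.
case: n hn hgamma hV hdiss hdelta => [//|n] _ hgamma hV hdiss hdelta /=.
set c := cos (pi / n.+2%:R) in hdelta *.
set P := \prod_(i < n.+1) gamma i in hdelta *.
have P0 : 0 < P by apply: prodr_gt0 => i _; apply: hgamma.
have c0 : 0 <= c.
  apply: cos_ge0_pihalf; apply/andP; split.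
    have : 0 < pi / (n.+2%:R : R) by rewrite divr_gt0 ?pi_gt0 ?ltr0n.
    move=> hp; apply: le_trans (ltW hp); rewrite oppr_le0 divr_ge0 // ltW // pi_gt0 //.
  apply: ler_wpM2l; first exact: ltW (@pi_gt0 R).
  rewrite lef_pV2 ?posrE ?ltr0n // ler_nat //.
have d0 : 0 < delta.
  by apply: le_lt_trans hdelta; apply: mulr_ge0; [exact: ltW | exact: exprn_ge0 c0].
pose b := (P / delta) `^ (n.+2%:R^-1).
have b0 : 0 < b by apply: powR_gt0; rewrite divr_gt0.
have bN : b ^+ n.+2 = P / delta.
  rewrite /b -powR_mulrn ?powR_ge0 // -powRrM mulVf ?powRr1 //.
  by rewrite ltW // divr_gt0.
have bc1 : b * c < 1.
  rewrite ltNge; apply/negP => H; have := exprn_ege1 n.+2 H.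
  rewrite exprMn bN mulrAC ler_pdivlMr // mul1r; lra.
pose s := Num.sqrt delta.
have s0 : 0 < s by rewrite sqrtr_gt0.
have s2 : s ^+ 2 = delta by rewrite sqr_sqrtr // ltW.
pose T k := (\prod_(j < k) gamma j) / (s * b ^+ k).
have Tpos : forall k, (k <= n.+1)%N -> 0 < T k.
  move=> k hk; apply: divr_gt0; last by rewrite mulr_gt0 // exprn_gt0.
  by apply: prodr_gt0 => j _; apply: hgamma; apply: leq_trans (ltn_ord j) hk.
have T_1 : T 1%N = gamma 0%N / (s * b) by rewrite /T big_ord1 expr1.
have T_S : forall k, T k.+1 = T k * gamma k / b.
  move=> k; rewrite /T big_ord_recr exprSr /=; field.
  by rewrite !gt_eqF ?exprn_gt0.
have T_N : T n.+1 = P / (s * b ^+ n.+1) by [].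
have HP : P = s ^+ 2 * b ^+ n.+2 by rewrite s2 bN mulrC divfK ?gt_eqF.
pose d i := (T i.+1 ^+ 2)^-1.
pose Ms := \sum_(i < n.+1) T i.+1 ^+ 2.
have Ms0 : 0 < Ms.
  rewrite /Ms big_ord_recl; apply: ltr_wpDr; first by apply: sumr_ge0 => i _; apply: sqr_ge0.
  by rewrite exprn_gt0 // Tpos.
pose eps := (1 - b * c) / Ms.
exists d, eps; split.
  by move=> i hi; rewrite /d invr_gt0 exprn_gt0 // Tpos.
split; first by rewrite /eps divr_gt0 //; lra.
move=> x u.
pose w k := match k with 0%N => s * u | k'.+1 => h k' (x k') / T k end.
have step1 : \sum_(i < n.+1) d i * 'd (V i) (x i) (f i (x i) (cascade_input h x u i))
   <= \sum_(i < n.+1) d i * (- h i (x i) ^+ 2 + gamma i * cascade_input h x u i * h i (x i)).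
  apply: ler_sum => i _; apply: ler_wpM2l; first by rewrite ltW // invr_gt0 exprn_gt0 // Tpos.
  exact: hdiss.
have term : forall k, (k <= n)%N ->
   d k * (- h k (x k) ^+ 2 + gamma k * cascade_input h x u k * h k (x k))
   = - w k.+1 ^+ 2 + b * (w k * w k.+1).
  case=> [_|k hk] /=.
    rewrite /d T_1; field.
    by rewrite !gt_eqF ?hgamma.
  rewrite /d T_S; field.
  by rewrite !gt_eqF ?hgamma ?Tpos // ltnW.
have step2 : \sum_(i < n.+1) d i * (- h i (x i) ^+ 2 + gamma i * cascade_input h x u i * h i (x i))
   = - \sum_(i < n.+1) w i.+1 ^+ 2 + b * \sum_(i < n.+1) w i * w i.+1.
  rewrite mulr_sumr -sumrN -big_split /=; apply: eq_bigr => i _.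
  by rewrite term // -ltnS.
have e1 : delta * u ^+ 2 = w 0%N ^+ 2 by rewrite /= exprMn s2.
have e2 : u * h n (x n) = b * (w 0%N * w n.+1).
  rewrite /w T_N HP [b ^+ n.+2]exprSr; field.
  by rewrite !gt_eqF ?exprn_gt0.
have eY : \sum_(i < n.+1) h i (x i) ^+ 2 = \sum_(i < n.+1) T i.+1 ^+ 2 * w i.+1 ^+ 2.
  apply: eq_bigr => i _ /=; field.
  by rewrite gt_eqF // Tpos.
have hY : \sum_(i < n.+1) h i (x i) ^+ 2 <= Ms * \sum_(i < n.+1) w i.+1 ^+ 2.
  rewrite eY mulr_sumr; apply: ler_sum => i _; apply: ler_wpM2r; first exact: sqr_ge0.
  rewrite /Ms (bigD1 i) //= lerDl; apply: sumr_ge0 => j _; exact: sqr_ge0.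
have hcore := @core_trig R n w.
have SW : \sum_(i < n.+2) w i ^+ 2 = w 0%N ^+ 2 + \sum_(i < n.+1) w i.+1 ^+ 2.
  by rewrite big_ord_recl.
rewrite SW -/c in hcore.
have H1 := ler_wpM2l (ltW b0) hcore.
have H2 : eps * \sum_(i < n.+1) h i (x i) ^+ 2 <= (1 - b * c) * \sum_(i < n.+1) w i.+1 ^+ 2.
  apply: le_trans (ler_wpM2l _ hY) _; first by rewrite ltW // /eps divr_gt0 //; lra.
  rewrite /eps mulrA divfK ?gt_eqF //.
have H3 : 0 <= (1 - b * c) * w 0%N ^+ 2 by rewrite mulr_ge0 ?sqr_ge0 //; lra.
apply: le_trans step1 _; rewrite step2 e1 e2.
lra.
Qed.
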